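(* Let $m$ be a positive integer, $\gamma\in C^m(\mathbb{R},\mathbb{R}^3)$, and $K\subseteq\mathbb{R}$ a compact set containing at least $m+1$ points. If $\gamma$ satisfies the $A/V$ condition on $K$, then $$\lim_{\substack{\operatorname{diam}X\to0\\ a,b\in X\subseteq K,\ a<b\\ \#X=m+1}}\left|\frac{A(\gamma;a,b)}{V(\gamma;a,b)}-\frac{A[X,\gamma;a,b]}{V[X,\gamma;a,b]}\right|=0,$$ i.e. for every $\varepsilon>0$ there is $\delta>0$ such that the displayed difference is $<\varepsilon$ for all $X\subseteq K$ with $\#X=m+1$, $\operatorname{diam}X<\delta$, and $a,b\in X$ with $a<b$. In particular, $\gamma$ satisfies the discrete $A/V$ condition on $K$.
   Context: $C^m(\mathbb{R},\mathbb{R}^3)$: curves whose components are $m$-times continuously differentiable with bounded $m$th derivative. For $\gamma=(f,g,h)$ and $a\in\mathbb{R}$, $T_af(x)=\sum_{k=0}^m\frac{f^{(k)}(a)}{k!}(x-a)^k$ (similarly $T_ag$); $A(\gamma;a,b)= h(b)-h(a)-2\int_a^b\big((T_af)'T_ag-(T_ag)'T_af\big) + 2f(a)(g(b)-T_ag(b)) - 2g(a)(f(b)-T_af(b))$, $V(\gamma;a,b)=(b-a)^{2m}+(b-a)^m\int_a^b(|(T_af)'|+|(T_ag)'|)$. $\gamma$ satisfies the $A/V$ condition on $E$ if for every $\varepsilon>0$ there is $\delta>0$ with $|A(\gamma;a,b)/V(\gamma;a,b)|<\varepsilon$ for all $a,b\in E$ with $0<b-a<\delta$. For $X$ a set of $m+1$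 distinct points, $P(X;\phi)$ is the unique polynomial of degree $\le m$ agreeing with $\phi$ on $X$; $P_f=P(X;f)$, $P_g=P(X;g)$, and for $a,b\in X$: $A[X,\gamma;a,b]=h(b)-h(a)-2\int_a^b(P_f'P_g-P_g'P_f)$, $V[X,\gamma;a,b]=\operatorname{diam}(X)^{2m}+\operatorname{diam}(X)^m\int_a^b(|P_f'|+|P_g'|)$. $\gamma$ satisfies the discrete $A/V$ condition on $E$ if for every $\varepsilon>0$ there is $\delta>0$ such that $|A[X,\gamma;a,b]/V[X,\gamma;a,b]|<\varepsilon$ for all $X\subseteq E$ with $\#X=m+1$, $\operatorname{diam}X<\delta$, and $a,b\in X$ with $a<b$. *)

(* Defs.v *)
From Stdlib Require Import Reals List ClassicalEpsilon.
From Coquelicot Require Import Coquelicot.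
Open Scope R_scope.

Definition Cm (m : nat) (f : R -> R) : Prop :=
  (forall k x, (k <= m)%nat -> ex_derive_n f k x) /\
  (forall k x, (k <= m)%nat -> continuous (Derive_n f k) x) /\
  (exists M, forall x, Rabs (Derive_n f m x) <= M).

Definition Taylor (m : nat) (f : R -> R) (a : R) (x : R) : R :=
  sum_f_R0 (fun k => Derive_n f k a / INR (Factorial.fact k) * (x - a) ^ k) m.

(* A(gamma; a, b) for gamma = (f, g, h) *)
Definition Acont (m : nat) (f g h : R -> R) (a b : R) : R :=
  h b - h a
  - 2 * RInt (fun x => Derive (Taylor m f a) x * Taylor m g a x
                       - Derive (Taylor m g a) x * Taylor m f a x) a b
  + 2 * f a * (g b - Taylor m g a b) - 2 * g a * (f b - Taylor m f a b).

Definition Vcont (m : nat) (f g : R -> R) (a b : R) : R :=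
  (b - a) ^ (2 * m)
  + (b - a) ^ m * RInt (fun x => Rabs (Derive (Taylor m f a) x)
                                + Rabs (Derive (Taylor m g a) x)) a b.

Definition AV_condition (m : nat) (f g h : R -> R) (E : R -> Prop) : Prop :=
  forall eps, 0 < eps -> exists delta, 0 < delta /\
    forall a b, E a -> E b -> 0 < b - a < delta ->
      Rabs (Acont m f g h a b / Vcont m f g a b) < eps.

(* Finite sets X are represented by duplicate-free lists.
   Polynomial of degree <= m with coefficients c. *)
Definition polyeval (m : nat) (c : nat -> R) (x : R) : R :=
  sum_f_R0 (fun k => c k * x ^ k) m.

(* P(X; phi): the (unique, when X has m+1 distinct points) polynomial of
   degree <= m agreeing with phi on X. *)
Definition interp (m : nat) (X : list R) (phi : R -> R) : R -> R :=
  polyeval m (epsilon (inhabits (fun _ : nat => 0))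
                (fun c => forall x, List.In x X -> polyeval m c x = phi x)).

Definition diam (X : list R) : R :=
  fold_right Rmax 0 (map (fun x => fold_right Rmax 0 (map (fun y => Rabs (x - y)) X)) X).

Definition Adisc (m : nat) (X : list R) (f g h : R -> R) (a b : R) : R :=
  h b - h a
  - 2 * RInt (fun x => Derive (interp m X f) x * interp m X g x
                       - Derive (interp m X g) x * interp m X f x) a b.

Definition Vdisc (m : nat) (X : list R) (f g : R -> R) (a b : R) : R :=
  diam X ^ (2 * m)
  + diam X ^ m * RInt (fun x => Rabs (Derive (interp m X f) x)
                               + Rabs (Derive (interp m X g) x)) a b.

Definition discrete_AV_condition (m : nat) (f g h : R -> R) (E : R -> Prop) : Prop :=
  forall eps, 0 < eps -> exists delta, 0 < delta /\
    forall X : list R, NoDup X -> length X = S m -> List.Forall E X -> diam X < delta ->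
      forall a b, List.In a X -> List.In b X -> a < b ->
        Rabs (Adisc m X f g h a b / Vdisc m X f g a b) < eps.

(* Main.v *)
Require Import Defs.
From Stdlib Require Import Reals List Sorting Lra Lia ClassicalEpsilon.
From Coquelicot Require Import Coquelicot.
Open Scope R_scope.

Definition C0 (F : R -> R) := forall x, continuous F x.

Lemma C0_plus F G : C0 F -> C0 G -> C0 (fun x => F x + G x).
Proof. intros HF HG x. exact (continuous_plus F G x (HF x) (HG x)). Qed.
Lemma C0_opp F : C0 F -> C0 (fun x => - F x).
Proof. intros HF x. exact (continuous_opp F x (HF x)). Qed.
Lemma C0_minus F G : C0 F -> C0 G -> C0 (fun x => F x - G x).
Proof. intros HF HG. apply C0_plus; auto. apply C0_opp; auto. Qed.
Lemma C0_mult F G : C0 F -> C0 G -> C0 (fun x => F x * G x).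
Proof. intros HF HG x. exact (continuous_mult F G x (HF x) (HG x)). Qed.
Lemma C0_const c : C0 (fun _ => c).
Proof. intros x. apply continuous_const. Qed.
Lemma C0_abs F : C0 F -> C0 (fun x => Rabs (F x)).
Proof. intros HF x. apply (continuous_comp F Rabs). apply HF. apply continuous_Rabs. Qed.
Lemma C0_deriv F F' : (forall x, is_derive F x (F' x)) -> C0 F.
Proof. intros H x. apply (@ex_derive_continuous R_AbsRing R_NormedModule). eexists; apply H. Qed.
Lemma C0_ext F G : (forall x, F x = G x) -> C0 F -> C0 G.
Proof. intros E HF x. eapply continuous_ext. exact E. apply HF. Qed.

Definition pc (n : nat) (c : nat -> R) (a x : R) : R :=
  sum_f_R0 (fun k => c k * (x - a) ^ k) n.
Definition dc (c : nat -> R) : nat -> R := fun k => INR (S k) * c (S k).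

Lemma pc0_derive c a (x : R) : is_derive (pc 0 c a) x 0.
Proof.
  apply is_derive_ext with (f := fun _ => c 0%nat).
  intros t; unfold pc; simpl; ring.
  auto_derive; auto.
Qed.

Lemma pow_derive a k (x : R) : is_derive (fun t => (t - a) ^ S k) x (INR (S k) * (x - a) ^ k).
Proof.
  auto_derive; auto. simpl pred. unfold INR; ring_simplify; reflexivity.
Qed.

Lemma isd_plus (F G : R -> R) (x : R) a b : is_derive F x a -> is_derive G x b ->
  is_derive (fun t => F t + G t) x (a + b).
Proof. intros H1 H2. exact (is_derive_plus F G x a b H1 H2). Qed.
Lemma isd_minus (F G : R -> R) (x : R) a b : is_derive F x a -> is_derive G x b ->
  is_derive (fun t => F t - G t) x (a - b).
Proof. intros H1 H2. exact (is_derive_minus F G x a b H1 H2). Qed.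
Lemma isd_mult (F G : R -> R) (x : R) a b : is_derive F x a -> is_derive G x b ->
  is_derive (fun t => F t * G t) x (a * G x + F x * b).
Proof. intros H1 H2. exact (is_derive_mult F G x a b H1 H2 Rmult_comm). Qed.

Lemma pc_derive n c a (x : R) : is_derive (pc (S n) c a) x (pc n (dc c) a x).
Proof.
  induction n.
  - unfold pc, dc; simpl. auto_derive; auto. ring.
  - apply is_derive_ext with (f := fun t => pc (S n) c a t + c (S (S n)) * (t - a) ^ (S (S n))).
    intros t; unfold pc; simpl; reflexivity.
    replace (pc (S n) (dc c) a x) with ((pc n (dc c) a x) + (c (S (S n)) * (INR (S (S n)) * (x - a) ^ (S n)))).
    2: { unfold pc at 2. simpl sum_f_R0. unfold pc, dc. simpl pow. ring. }
    apply isd_plus. apply IHn. apply is_derive_scal. apply pow_derive.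
Qed.

Lemma pc_C0 n c a : C0 (pc n c a).
Proof.
  destruct n. apply C0_deriv with (fun _ => 0). intros; apply pc0_derive.
  apply C0_deriv with (pc n (dc c) a). intros; apply pc_derive.
Qed.

Lemma pc_at n c a : pc n c a a = c 0%nat.
Proof.
  induction n. unfold pc; simpl; ring.
  unfold pc in *; simpl. rewrite IHn. rewrite Rminus_diag. simpl. ring.
Qed.

Lemma Derive_n_pc j : forall n c a x, (j <= n)%nat ->
  Derive_n (pc n c a) j x = pc (n - j) (Nat.iter j dc c) a x.
Proof.
  induction j; intros n c a x Hj.
  - simpl. rewrite Nat.sub_0_r. reflexivity.
  - simpl Derive_n. rewrite (Derive_ext _ (pc (n - j) (Nat.iter j dc c) a)).
    2: { intros t; apply IHj; lia. }
    replace (n - j)%nat with (S (n - S j)) by lia.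
    apply is_derive_unique. apply pc_derive.
Qed.

Lemma iter_dc j : forall c k, Nat.iter j dc c k = c (k + j)%nat * INR (Factorial.fact (k + j)) / INR (Factorial.fact k).
Proof.
  induction j; intros c k.
  - rewrite Nat.add_0_r. simpl. field. apply not_0_INR. apply Factorial.fact_neq_0.
  - simpl Nat.iter. unfold dc at 1. rewrite IHj.
    replace (S k + j)%nat with (k + S j)%nat by lia.
    replace (Factorial.fact (S k)) with (S k * Factorial.fact k)%nat by reflexivity. rewrite mult_INR.
    field. split; apply not_0_INR. apply Factorial.fact_neq_0. lia.
Qed.

Lemma pc_Dn_derive p n c a j (x : R) : (forall t, p t = pc n c a t) -> (j < n)%nat ->
  is_derive (Derive_n p j) x (Derive_n p (S j) x).
Proof.
  intros E Hj.
  assert (Hd : forall i y, (i <= n)%nat -> Derive_n p i y = pc (n - i) (Nat.iter i dc c) a y).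
  { intros i y Hi. rewrite (Derive_n_ext p (pc n c a)) by exact E. apply Derive_n_pc; auto. }
  rewrite Hd by lia.
  apply is_derive_ext with (f := pc (n - j) (Nat.iter j dc c) a).
  intros t; rewrite Hd by lia; reflexivity.
  replace (n - j)%nat with (S (n - S j)) by lia. apply pc_derive.
Qed.

Lemma pc_Dn_const p n c a x y : (forall t, p t = pc n c a t) ->
  Derive_n p n x = Derive_n p n y.
Proof.
  intros E. rewrite !(Derive_n_ext p (pc n c a)) by exact E.
  rewrite !Derive_n_pc by lia. rewrite Nat.sub_diag. unfold pc; simpl. reflexivity.
Qed.

Lemma pc_Dn_C0 p n c a j : (forall t, p t = pc n c a t) -> (j <= n)%nat -> C0 (Derive_n p j).
Proof.
  intros E Hj. apply C0_ext with (pc (n - j) (Nat.iter j dc c) a).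
  intros t. rewrite (Derive_n_ext p (pc n c a)) by exact E. rewrite Derive_n_pc; auto.
  apply pc_C0.
Qed.

Lemma Taylor_pc m f a x : Taylor m f a x = pc m (fun k => Derive_n f k a / INR (Factorial.fact k)) a x.
Proof. reflexivity. Qed.

Lemma Taylor_Dn_at m f a j : (j <= m)%nat -> Derive_n (Taylor m f a) j a = Derive_n f j a.
Proof.
  intros Hj. rewrite (Derive_n_ext _ (pc m (fun k => Derive_n f k a / INR (Factorial.fact k)) a)) by (intros; reflexivity).
  rewrite Derive_n_pc by auto. rewrite pc_at. rewrite iter_dc. simpl (0 + j)%nat. simpl (Factorial.fact 0). simpl INR.
  field. apply not_0_INR. apply Factorial.fact_neq_0.
Qed.

Lemma isd_cpt F x l : is_derive F x l -> continuity_pt F x.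
Proof.
  intros H. apply continuity_pt_filterlim.
  apply (@ex_derive_continuous R_AbsRing R_NormedModule). eexists; exact H.
Qed.

Lemma down_bound (m : nat) (Phi : nat -> R -> R) lo hi w :
  (forall j (x : R), (j < m)%nat -> is_derive (Phi j) x (Phi (S j) x)) ->
  (forall j, (j <= m)%nat -> exists z, lo <= z <= hi /\ Phi j z = 0) ->
  (forall x y, lo <= x <= hi -> lo <= y <= hi -> Rabs (Phi m x - Phi m y) <= w) ->
  forall j x, (j <= m)%nat -> lo <= x <= hi -> Rabs (Phi j x) <= w * (hi - lo) ^ (m - j).
Proof.
  intros Hd Hz Hw.
  assert (K : forall k x, (k <= m)%nat -> lo <= x <= hi -> Rabs (Phi (m - k)%nat x) <= w * (hi - lo) ^ k).
  { induction k; intros x Hk Hx.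
    - rewrite Nat.sub_0_r. destruct (Hz m (le_n m)) as [z [Hz1 Hz2]].
      replace (Phi m x) with (Phi m x - Phi m z) by (rewrite Hz2; ring).
      simpl. rewrite Rmult_1_r. apply Hw; auto.
    - destruct (Hz (m - S k)%nat ltac:(lia)) as [z [Hz1 Hz2]].
      assert (Hs : S (m - S k) = (m - k)%nat) by lia.
      destruct (MVT_gen (Phi (m - S k)%nat) z x (Phi (m - k)%nat)) as [c [Hc1 Hc2]].
      + intros y _. rewrite <- Hs. apply Hd. lia.
      + intros y _. eapply isd_cpt. apply (Hd (m - S k)%nat y). lia.
      + rewrite Hz2, Rminus_0_r in Hc2. rewrite Hc2.
        assert (Hc : lo <= c <= hi).
        { revert Hc1. unfold Rmin, Rmax. destruct (Rle_dec z x); lra. }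
        rewrite Rabs_mult. simpl.
        assert (H0 : 0 <= w). { pose proof (Hw x x Hx Hx). rewrite Rminus_diag, Rabs_R0 in H. lra. }
        assert (H1 : 0 <= (hi - lo) ^ k). { apply pow_le. lra. }
        assert (H2 : Rabs (x - z) <= hi - lo). { apply Rabs_le. lra. }
        pose proof (IHk c ltac:(lia) Hc).
        replace (w * ((hi - lo) * (hi - lo) ^ k)) with ((w * (hi - lo) ^ k) * (hi - lo)) by ring.
        apply Rmult_le_compat; auto; apply Rabs_pos. }
  intros j x Hj Hx. replace j with (m - (m - j))%nat at 1 by lia. apply K; auto; lia.
Qed.

Lemma insert_sorted (x : R) : forall l, StronglySorted Rlt l -> ~ In x l ->
  exists l', length l' = S (length l) /\ StronglySorted Rlt l' /\ (forall y, In y l' -> y = x \/ In y l).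
Proof.
  induction l as [|y r IH]; intros Hs Hn.
  - exists (x :: nil). repeat split; auto. constructor; auto. intros y [H|[]]; auto.
  - inversion Hs as [|? ? Hr Hf]; subst.
    destruct (Rlt_dec x y) as [Hxy|Hxy].
    + exists (x :: y :: r). repeat split; auto.
      constructor; auto. constructor; auto. eapply Forall_impl. 2: exact Hf. intros z Hz; lra.
      intros z [Hz|Hz]; auto.
    + assert (y < x). { assert (x <> y) by (intro; apply Hn; left; auto). lra. }
      destruct (IH Hr (fun H' => Hn (or_intror H'))) as [l' [L1 [L2 L3]]].
      exists (y :: l'). repeat split. simpl; lia.
      constructor; auto. apply Forall_forall. intros z Hz. destruct (L3 z Hz) as [->|Hz']; auto.
      rewrite Forall_forall in Hf; auto.
      intros z [Hz|Hz]. right; left; auto. destruct (L3 z Hz); auto. right; right; auto.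
Qed.

Lemma sort_exists : forall l : list R, NoDup l ->
  exists l', length l' = length l /\ StronglySorted Rlt l' /\ (forall x, In x l' -> In x l).
Proof.
  induction l as [|x r IH]; intros Hn.
  - exists nil. repeat split; auto. constructor.
  - inversion Hn as [|? ? Hnx Hnr]; subst. destruct (IH Hnr) as [l' [L1 [L2 L3]]].
    destruct (insert_sorted x l' L2) as [l'' [M1 [M2 M3]]].
    { intro Hx; apply Hnx; auto. }
    exists l''. repeat split; auto. simpl; lia.
    intros z Hz. destruct (M3 z Hz) as [->|Hz']. left; auto. right; auto.
Qed.

Lemma rolle_step (F F' : R -> R) (lo hi : R) : (forall x : R, is_derive F x (F' x)) ->
  forall l, StronglySorted Rlt l -> List.Forall (fun y => lo <= y <= hi /\ F y = 0) l ->
  exists l', length l' = pred (length l) /\ StronglySorted Rlt l' /\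
    List.Forall (fun y => lo <= y <= hi /\ F' y = 0) l' /\
    (forall x0 r, l = x0 :: r -> List.Forall (fun y => x0 < y) l').
Proof.
  intros HF. induction l as [|x r IH]; intros Hs Hz.
  - exists nil; split; [reflexivity|split; [constructor|split; [constructor|intros; constructor]]].
  - destruct r as [|y r'].
    + exists nil; split; [reflexivity|split; [constructor|split; [constructor|intros; constructor]]].
    + inversion Hs as [|? ? Hr Hf]; subst. inversion Hz as [|? ? Hzx Hzr]; subst.
      destruct (IH Hr Hzr) as [l'' [L1 [L2 [L3 L4]]]].
      specialize (L4 y r' eq_refl).
      inversion Hf as [|? ? Hxy Hfr]; subst.
      inversion Hzr as [|? ? Hzy _]; subst.
      destruct (MVT_cor2 F F' x y Hxy) as [c [Hc1 Hc2]].
      { intros c _. apply is_derive_Reals. apply HF. }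
      assert (Hc0 : F' c = 0).
      { destruct Hzx as [_ E1]. destruct Hzy as [_ E2]. rewrite E1, E2 in Hc1.
        assert (F' c * (y - x) = 0) by lra.
        apply Rmult_integral in H. destruct H; auto. lra. }
      exists (c :: l''). repeat split.
      * simpl in *. lia.
      * constructor; auto. eapply Forall_impl. 2: exact L4. intros z Hz'; lra.
      * constructor; auto. split; auto. destruct Hzx, Hzy; lra.
      * intros x0 r0 E. injection E as <- <-. constructor. lra.
        eapply Forall_impl. 2: exact L4. intros z Hz'; lra.
Qed.

Lemma rolle_iter (m : nat) (Phi : nat -> R -> R) (lo hi : R) :
  (forall j (x : R), (j < m)%nat -> is_derive (Phi j) x (Phi (S j) x)) ->
  forall l, StronglySorted Rlt l -> length l = S m ->
  List.Forall (fun y => lo <= y <= hi /\ Phi 0%nat y = 0) l ->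
  forall j, (j <= m)%nat -> exists z, lo <= z <= hi /\ Phi j z = 0.
Proof.
  intros Hd l Hs Hl Hz.
  assert (K : forall j, (j <= m)%nat -> exists l', length l' = (S m - j)%nat /\ StronglySorted Rlt l' /\
     List.Forall (fun y => lo <= y <= hi /\ Phi j y = 0) l').
  { induction j; intros Hj.
    - exists l. split; [rewrite Hl; lia|split; auto].
    - destruct (IHj ltac:(lia)) as [l' [L1 [L2 L3]]].
      destruct (rolle_step (Phi j) (Phi (S j)) lo hi (fun x => Hd j x ltac:(lia)) l' L2 L3) as [l'' [M1 [M2 [M3 _]]]].
      exists l''. split; [rewrite M1, L1; lia|split; auto]. }
  intros j Hj. destruct (K j Hj) as [l' [L1 [L2 L3]]].
  destruct l' as [|z r]. { simpl length in L1. lia. }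
  inversion L3; subst. exists z; auto.
Qed.

Definition isPoly n (p : R -> R) := exists c, forall x, p x = polyeval n c x.

Lemma isPoly_mono n n' p : isPoly n p -> (n <= n')%nat -> isPoly n' p.
Proof.
  intros [c Hc] Hn. exists (fun k => if (k <=? n)%nat then c k else 0).
  intros x. rewrite Hc. replace n' with (n + (n' - n))%nat by lia.
  generalize (n' - n)%nat as d. induction d.
  - rewrite Nat.add_0_r. unfold polyeval. apply sum_eq. intros i Hi.
    destruct (Nat.leb_spec i n); [reflexivity|lia].
  - rewrite Nat.add_succ_r. unfold polyeval in *. rewrite tech5, <- IHd.
    destruct (Nat.leb_spec (S (n + d)) n); [lia|]. rewrite Rmult_0_l, Rplus_0_r. reflexivity.
Qed.

Lemma isPoly_plus n p q : isPoly n p -> isPoly n q -> isPoly n (fun t => p t + q t).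
Proof.
  intros [c Hc] [d Hd]. exists (fun k => c k + d k). intros x. rewrite Hc, Hd.
  unfold polyeval. rewrite <- sum_plus. apply sum_eq. intros; ring.
Qed.

Lemma isPoly_scal n p a : isPoly n p -> isPoly n (fun t => a * p t).
Proof.
  intros [c Hc]. exists (fun k => a * c k). intros x. rewrite Hc.
  unfold polyeval. rewrite scal_sum. apply sum_eq. intros; ring.
Qed.

Lemma isPoly_const a : isPoly 0 (fun _ => a).
Proof. exists (fun _ => a). intros x. unfold polyeval. simpl. ring. Qed.

Lemma isPoly_mulX n p y : isPoly n p -> isPoly (S n) (fun t => (t - y) * p t).
Proof.
  intros Hp.
  assert (H1 : isPoly (S n) (fun t => t * p t)).
  { destruct Hp as [c Hc]. exists (fun k => match k with O => 0 | S k' => c k' end).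
    intros x. rewrite Hc. unfold polyeval. rewrite (decomp_sum _ (S n)) by lia. simpl pred.
    rewrite scal_sum. simpl. rewrite Rmult_0_l, Rplus_0_l. apply sum_eq. intros; ring. }
  assert (H2 : isPoly (S n) (fun t => (- y) * p t)).
  { apply isPoly_mono with n; auto. apply isPoly_scal; auto. }
  destruct (isPoly_plus _ _ _ H1 H2) as [c Hc]. exists c. intros x. rewrite <- Hc. ring.
Qed.

Definition wpoly (l : list R) (t : R) : R := fold_right (fun y acc => (t - y) * acc) 1 l.

Lemma wpoly_isPoly l : isPoly (length l) (wpoly l).
Proof.
  induction l as [|y r IH]. apply isPoly_const.
  simpl. apply isPoly_mulX with (p := wpoly r). auto.
Qed.

Lemma wpoly_zero l y : In y l -> wpoly l y = 0.
Proof.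
  induction l as [|z r IH]; simpl; intros H. destruct H.
  destruct H as [->|H]. ring. rewrite IH; auto; ring.
Qed.

Lemma wpoly_nz l x : ~ In x l -> wpoly l x <> 0.
Proof.
  induction l as [|z r IH]; simpl; intros H. lra.
  apply Rmult_integral_contrapositive. split. intro; apply H; left; lra.
  apply IH. intro; apply H; right; auto.
Qed.

Lemma interp_exists (phi : R -> R) : forall l, NoDup l -> forall n, (length l <= S n)%nat ->
  exists c, forall x, In x l -> polyeval n c x = phi x.
Proof.
  induction l as [|x r IH]; intros Hn n Hl.
  - exists (fun _ => 0). intros x [].
  - inversion Hn as [|? ? Hnx Hnr]; subst. simpl in Hl.
    destruct (IH Hnr n ltac:(lia)) as [cq Hq].
    set (al := (phi x - polyeval n cq x) / wpoly r x).
    assert (HP : isPoly n (fun t => polyeval n cq t + al * wpoly r t)).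
    { apply isPoly_plus. { exists cq; intros; reflexivity. } apply isPoly_scal. apply isPoly_mono with (length r).
      apply wpoly_isPoly. lia. }
    destruct HP as [c Hc]. exists c. intros y Hy. rewrite <- Hc.
    destruct Hy as [<-|Hy].
    + unfold al. field. apply wpoly_nz; auto.
    + rewrite wpoly_zero by auto. rewrite Hq by auto. ring.
Qed.

Lemma interp_spec (m : nat) (X : list R) (phi : R -> R) : NoDup X -> length X = S m -> forall x, In x X -> Defs.interp m X phi x = phi x.
Proof.
  intros Hn Hl. unfold Defs.interp.
  apply (epsilon_spec (inhabits (fun _ : nat => 0)) (fun c => forall x, In x X -> polyeval m c x = phi x)).
  apply interp_exists; auto. lia.
Qed.

Lemma interp_pc (m : nat) (X : list R) (phi : R -> R) : exists c, forall t, Defs.interp m X phi t = pc m c 0 t.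
Proof.
  exists (epsilon (inhabits (fun _ : nat => 0)) (fun c => forall x, In x X -> polyeval m c x = phi x)).
  intros t. unfold Defs.interp, polyeval, pc. apply sum_eq. intros i _. rewrite Rminus_0_r. reflexivity.
Qed.

Lemma isR_plus (f g : R -> R) a b If Ig : is_RInt f a b If -> is_RInt g a b Ig ->
  is_RInt (fun y => f y + g y) a b (If + Ig).
Proof. intros H1 H2. exact (is_RInt_plus f g a b If Ig H1 H2). Qed.
Lemma isR_minus (f g : R -> R) a b If Ig : is_RInt f a b If -> is_RInt g a b Ig ->
  is_RInt (fun y => f y - g y) a b (If - Ig).
Proof. intros H1 H2. exact (is_RInt_minus f g a b If Ig H1 H2). Qed.
Lemma isR_scal (f : R -> R) a b k If : is_RInt f a b If ->
  is_RInt (fun y => k * f y) a b (k * If).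
Proof. intros H1. exact (is_RInt_scal f a b k If H1). Qed.
Lemma C0_ex F a b : C0 F -> ex_RInt F a b.
Proof. intros H. apply (@ex_RInt_continuous R_CompleteNormedModule). intros z _; apply H. Qed.
Lemma C0_is F a b : C0 F -> is_RInt F a b (RInt F a b).
Proof. intros H. apply (@RInt_correct R_CompleteNormedModule). apply C0_ex; auto. Qed.

Lemma bilin (F G w z F' G' w' z' : R -> R) a b :
  (forall x : R, is_derive F x (F' x)) -> (forall x : R, is_derive G x (G' x)) ->
  (forall x : R, is_derive w x (w' x)) -> (forall x : R, is_derive z x (z' x)) ->
  C0 F' -> C0 G' -> C0 w' -> C0 z' ->
  RInt (fun x => (F' x + w' x) * (G x + z x) - (G' x + z' x) * (F x + w x)) a b =
  RInt (fun x => F' x * G x - G' x * F x) a b + 2 * RInt (fun x => F' x * z x - G' x * w x) a b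
  - (F b * z b - F a * z a) + (G b * w b - G a * w a) + RInt (fun x => w' x * z x - z' x * w x) a b.
Proof.
  intros dF dG dw dz cF' cG' cw' cz'.
  pose proof (C0_deriv _ _ dF) as cF. pose proof (C0_deriv _ _ dG) as cG.
  pose proof (C0_deriv _ _ dw) as cw. pose proof (C0_deriv _ _ dz) as cz.
  assert (I1 := C0_is (fun x => F' x * G x - G' x * F x) a b
    ltac:(apply C0_minus; apply C0_mult; auto)).
  assert (I2 := C0_is (fun x => F' x * z x - G' x * w x) a b
    ltac:(apply C0_minus; apply C0_mult; auto)).
  assert (I3 := C0_is (fun x => w' x * z x - z' x * w x) a b
    ltac:(apply C0_minus; apply C0_mult; auto)).
  assert (I4 : is_RInt (fun x => F' x * z x + F x * z' x) a b (F b * z b - F a * z a)).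
  { apply (is_RInt_derive (fun x => F x * z x)).
    intros x _. apply isd_mult; auto.
    intros x _. apply C0_plus; apply C0_mult; auto. }
  assert (I5 : is_RInt (fun x => w' x * G x + w x * G' x) a b (G b * w b - G a * w a)).
  { replace (G b * w b - G a * w a) with (w b * G b - w a * G a) by ring.
    apply (is_RInt_derive (fun x => w x * G x)).
    intros x _. apply isd_mult; auto.
    intros x _. apply C0_plus; apply C0_mult; auto. }
  apply is_RInt_unique.
  pose proof (isR_plus _ _ _ _ _ _ (isR_plus _ _ _ _ _ _ (isR_minus _ _ _ _ _ _ (isR_plus _ _ _ _ _ _ I1 (isR_scal _ _ _ 2 _ I2)) I4) I5) I3) as H.
  eapply is_RInt_ext. 2: exact H.
  intros x _. simpl. ring.
Qed.

Lemma Cm_deriv m f : (0 < m)%nat -> Cm m f -> (forall x : R, is_derive f x (Derive f x)) /\ C0 (Derive f).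
Proof.
  intros Hm [H1 [H2 _]]. split.
  - intros x. apply Derive_correct. exact (H1 1%nat x Hm).
  - intros x. exact (H2 1%nat x Hm).
Qed.

Lemma poly_deriv p n c a : (0 < n)%nat -> (forall t, p t = pc n c a t) ->
  (forall x : R, is_derive p x (Derive p x)) /\ C0 (Derive p).
Proof.
  intros Hn E. split.
  - intros x. exact (pc_Dn_derive p n c a 0 x E Hn).
  - exact (pc_Dn_C0 p n c a 1 E Hn).
Qed.

Lemma Cm_Dn_derive m f j (x : R) : Cm m f -> (j < m)%nat -> is_derive (Derive_n f j) x (Derive_n f (S j) x).
Proof.
  intros [H1 _] Hj. apply Derive_correct. exact (H1 (S j) x Hj).
Qed.

Lemma taylor_bounds m f a b w : (0 < m)%nat -> Cm m f -> a <= b ->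
  (forall x y, a <= x <= b -> a <= y <= b -> Rabs (Derive_n f m x - Derive_n f m y) <= w) ->
  forall x, a <= x <= b -> Rabs (f x - Taylor m f a x) <= w * (b - a) ^ m /\
     Rabs (Derive f x - Derive (Taylor m f a) x) <= w * (b - a) ^ (m - 1).
Proof.
  intros Hm Hf Hab Hw.
  set (c := fun k => Derive_n f k a / INR (Factorial.fact k)).
  assert (E : forall t, Taylor m f a t = pc m c a t) by (intros; reflexivity).
  set (Phi := fun j x => Derive_n f j x - Derive_n (Taylor m f a) j x).
  assert (B := down_bound m Phi a b w).
  assert (B' : forall j x, (j <= m)%nat -> a <= x <= b -> Rabs (Phi j x) <= w * (b - a) ^ (m - j)).
  { apply B.
    - intros j x Hj. unfold Phi. apply isd_minus. apply (Cm_Dn_derive m); auto.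
      apply (pc_Dn_derive _ m c a j x E Hj).
    - intros j Hj. exists a. split. lra. unfold Phi. rewrite Taylor_Dn_at by auto. ring.
    - intros x y Hx Hy. unfold Phi. rewrite (pc_Dn_const _ m c a x y E).
      replace (Derive_n f m x - Derive_n (Taylor m f a) m y - (Derive_n f m y - Derive_n (Taylor m f a) m y))
        with (Derive_n f m x - Derive_n f m y) by ring. auto. }
  intros x Hx. split.
  - pose proof (B' 0%nat x ltac:(lia) Hx). rewrite Nat.sub_0_r in H. exact H.
  - exact (B' 1%nat x Hm Hx).
Qed.

Lemma diam_fold (l : list R) v : In v l -> v <= fold_right Rmax 0 l.
Proof.
  induction l as [|y r IH]; simpl; intros H. destruct H.
  destruct H as [->|H]. apply Rmax_l. eapply Rle_trans. apply IH; auto. apply Rmax_r.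
Qed.

Lemma diam_ge X x y : In x X -> In y X -> Rabs (x - y) <= diam X.
Proof.
  intros Hx Hy. unfold diam.
  eapply Rle_trans. 2: apply diam_fold. 2: apply in_map; exact Hx.
  apply diam_fold. apply (in_map (fun y0 => Rabs (x - y0))). exact Hy.
Qed.

Lemma interp_bounds m f X a D w : (0 < m)%nat -> Cm m f -> NoDup X -> length X = S m ->
  (forall y, In y X -> a - D <= y <= a + D) ->
  (forall x y, a - D <= x <= a + D -> a - D <= y <= a + D -> Rabs (Derive_n f m x - Derive_n f m y) <= w) ->
  forall x, a - D <= x <= a + D -> Rabs (f x - Defs.interp m X f x) <= w * (2 * D) ^ m /\
     Rabs (Derive f x - Derive (Defs.interp m X f) x) <= w * (2 * D) ^ (m - 1).
Proof.
  intros Hm Hf Hn Hl HX Hw.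
  destruct (interp_pc m X f) as [c E].
  set (Phi := fun j x => Derive_n f j x - Derive_n (Defs.interp m X f) j x).
  assert (Hd : forall j (x : R), (j < m)%nat -> is_derive (Phi j) x (Phi (S j) x)).
  { intros j x Hj. unfold Phi. apply isd_minus. apply (Cm_Dn_derive m); auto.
    apply (pc_Dn_derive _ m c 0 j x E Hj). }
  destruct (sort_exists X Hn) as [l [L1 [L2 L3]]].
  assert (Z := rolle_iter m Phi (a - D) (a + D) Hd l L2 ltac:(lia)).
  assert (B' : forall j x, (j <= m)%nat -> a - D <= x <= a + D -> Rabs (Phi j x) <= w * (a + D - (a - D)) ^ (m - j)).
  { apply down_bound; auto.
    - apply Z. apply Forall_forall. intros y Hy. split. apply HX; auto.
      unfold Phi. simpl. rewrite interp_spec; auto. ring.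
    - intros x y Hx Hy. unfold Phi. rewrite (pc_Dn_const _ m c 0 x y E).
      replace (Derive_n f m x - Derive_n (Defs.interp m X f) m y - (Derive_n f m y - Derive_n (Defs.interp m X f) m y))
        with (Derive_n f m x - Derive_n f m y) by ring. auto. }
  replace (a + D - (a - D)) with (2 * D) in B' by ring.
  intros x Hx. split.
  - pose proof (B' 0%nat x ltac:(lia) Hx). rewrite Nat.sub_0_r in H. exact H.
  - exact (B' 1%nat x Hm Hx).
Qed.

Lemma abs_le_mult a b c d : Rabs a <= c -> Rabs b <= d -> Rabs (a * b) <= c * d.
Proof. intros H1 H2. rewrite Rabs_mult. apply Rmult_le_compat; auto; apply Rabs_pos. Qed.

Lemma alg (w M p QT QP JT JP KT KP dF dG sb tb bm : R) :
  0 <= w <= 1 -> 1 <= M -> 0 < p -> 0 <= QT -> 0 <= QP -> 0 < bm <= p ->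
  Rabs JT <= w * p * QT -> Rabs dF <= QT -> Rabs dG <= QT -> Rabs sb <= w * p -> Rabs tb <= w * p ->
  Rabs KT <= 2 * w * w * p * p -> Rabs JP <= w * M * p * QP -> Rabs KP <= 2 * w * w * M * M * p * p ->
  QT <= QP + 4 * w * M * p ->
  bm * bm + bm * QT <= (1 + 4 * M) * (p * p + p * QP) /\
  Rabs (4 * JT - 2 * dF * tb + 2 * dG * sb + 2 * KT - 4 * JP - 2 * KP) <= 52 * M * M * w * (p * p + p * QP).
Proof.
  intros Hw HM Hp HQT HQP Hbm h1 h2 h3 h4 h5 h6 h7 h8 h9.
  assert (HpQT : p * QT <= p * QP + 4 * w * M * p * p).
  { replace (p * QP + 4 * w * M * p * p) with (p * (QP + 4 * w * M * p)) by ring.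
    apply Rmult_le_compat_l; lra. }
  split.
  - assert (bm * bm <= p * p) by (apply Rmult_le_compat; lra).
    assert (bm * QT <= p * QT) by (apply Rmult_le_compat_r; lra).
    assert (4 * w * M * p * p <= 4 * M * (p * p)).
    { assert (0 <= 4 * M * (p * p)) by (apply Rmult_le_pos; [lra|apply Rmult_le_pos; lra]).
      assert (0 <= (1 - w) * (4 * M * (p * p))) by (apply Rmult_le_pos; lra).
      replace (4 * w * M * p * p) with (4 * M * (p * p) - (1 - w) * (4 * M * (p * p))) by ring. lra. }
    assert (0 <= 4 * M * (p * QP)) by (apply Rmult_le_pos; [lra|apply Rmult_le_pos; lra]).
    replace ((1 + 4 * M) * (p * p + p * QP)) with (p * p + p * QP + 4 * M * (p * p) + 4 * M * (p * QP)) by ring.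
    lra.
  - assert (e1 : Rabs (dF * tb) <= QT * (w * p)) by (apply abs_le_mult; auto).
    assert (e2 : Rabs (dG * sb) <= QT * (w * p)) by (apply abs_le_mult; auto).
    assert (T : Rabs (4 * JT - 2 * dF * tb + 2 * dG * sb + 2 * KT - 4 * JP - 2 * KP) <=
      4 * Rabs JT + 2 * Rabs (dF * tb) + 2 * Rabs (dG * sb) + 2 * Rabs KT + 4 * Rabs JP + 2 * Rabs KP).
    { repeat match goal with |- context [Rabs ?x] => idtac end.
      pose proof (Rabs_triang (4 * JT) (- (2 * (dF * tb)))).
      pose proof (Rabs_triang (4 * JT - 2 * (dF * tb)) (2 * (dG * sb))).
      pose proof (Rabs_triang (4 * JT - 2 * (dF * tb) + 2 * (dG * sb)) (2 * KT)).
      pose proof (Rabs_triang (4 * JT - 2 * (dF * tb) + 2 * (dG * sb) + 2 * KT) (- (4 * JP))).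
      pose proof (Rabs_triang (4 * JT - 2 * (dF * tb) + 2 * (dG * sb) + 2 * KT - 4 * JP) (- (2 * KP))).
      rewrite Rabs_Ropp in *. rewrite !Rabs_mult in *.
      rewrite (Rabs_right 4) in * by lra. rewrite (Rabs_right 2) in * by lra.
      replace (4 * JT - 2 * dF * tb + 2 * dG * sb + 2 * KT - 4 * JP - 2 * KP) with
        (4 * JT - 2 * (dF * tb) + 2 * (dG * sb) + 2 * KT - 4 * JP - 2 * KP) by ring.
      unfold Rminus in *. lra. }
    assert (Ww : w * w <= w).
    { pose proof (Rmult_le_compat_r w w 1 ltac:(lra) ltac:(lra)). lra. }
    assert (P1 : 0 <= p * p) by (apply Rmult_le_pos; lra).
    assert (P2 : 0 <= p * QP) by (apply Rmult_le_pos; lra).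
    assert (P3 : 0 <= M * (p * p)) by (apply Rmult_le_pos; lra).
    assert (P4 : 0 <= M * M * (p * p)) by (apply Rmult_le_pos; [apply Rmult_le_pos|]; lra).
    assert (P5 : 0 <= M * (p * QP)) by (apply Rmult_le_pos; lra).
    assert (A1 : 8 * w * (p * QT) <= 8 * w * (p * QP) + 32 * w * (M * (p * p))).
    { assert (8 * w * (p * QT) <= 8 * w * (p * QP + 4 * w * M * p * p)) by (apply Rmult_le_compat_l; lra).
      assert (32 * (w * w) * (M * (p * p)) <= 32 * w * (M * (p * p))).
      { apply Rmult_le_compat_r; lra. }
      replace (8 * w * (p * QP + 4 * w * M * p * p)) with (8 * w * (p * QP) + 32 * (w * w) * (M * (p * p))) in H by ring.
      lra. }
    assert (A2 : (w * w) * (p * p) <= w * (p * p)) by (apply Rmult_le_compat_r; lra).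
    assert (A3 : (w * w) * (M * M * (p * p)) <= w * (M * M * (p * p))) by (apply Rmult_le_compat_r; lra).
    assert (A4 : Rabs JT <= w * (p * QT)) by (eapply Rle_trans; [exact h1| right; ring]).
    assert (A5 : Rabs KT <= 2 * (w * w) * (p * p)) by (eapply Rle_trans; [exact h6| right; ring]).
    assert (A6 : Rabs JP <= w * (M * (p * QP))) by (eapply Rle_trans; [exact h7| right; ring]).
    assert (A7 : Rabs KP <= 2 * (w * w) * (M * M * (p * p))) by (eapply Rle_trans; [exact h8| right; ring]).
    assert (A8 : QT * (w * p) = w * (p * QT)) by ring.
    rewrite A8 in e1, e2.
    assert (B1 : w * (M * (p * QP)) <= w * (M * M * (p * QP))).
    { apply Rmult_le_compat_l; [lra|]. replace (M * M * (p * QP)) with (M * (M * (p * QP))) by ring.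
      pose proof (Rmult_le_compat_r (M * (p * QP)) 1 M ltac:(lra) HM). lra. }
    assert (B2 : w * (p * QP) <= w * (M * M * (p * QP))).
    { apply Rmult_le_compat_l; [lra|]. assert (1 <= M * M) by nra.
      pose proof (Rmult_le_compat_r (p * QP) 1 (M * M) P2 H). lra. }
    assert (B3 : w * (p * p) <= w * (M * M * (p * p))).
    { apply Rmult_le_compat_l; [lra|]. assert (1 <= M * M) by nra.
      pose proof (Rmult_le_compat_r (p * p) 1 (M * M) P1 H). lra. }
    assert (B4 : w * (M * (p * p)) <= w * (M * M * (p * p))).
    { apply Rmult_le_compat_l; [lra|]. replace (M * M * (p * p)) with (M * (M * (p * p))) by ring.
      pose proof (Rmult_le_compat_r (M * (p * p)) 1 M P3 HM). lra. }
    assert (0 <= w * (M * M * (p * QP))) by (apply Rmult_le_pos; [lra|apply Rmult_le_pos; [nra|lra]]).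
    assert (0 <= w * (M * M * (p * p))) by (apply Rmult_le_pos; lra).
    replace (52 * M * M * w * (p * p + p * QP)) with (52 * (w * (M * M * (p * QP))) + 52 * (w * (M * M * (p * p)))) by ring.
    lra.
Qed.

Lemma RInt_abs_bound F G a b : a <= b -> C0 F -> C0 G ->
  (forall x, a <= x <= b -> Rabs (F x) <= G x) -> Rabs (RInt F a b) <= RInt G a b.
Proof.
  intros Hab cF cG H. eapply Rle_trans. apply abs_RInt_le; auto. apply C0_ex; auto.
  apply RInt_le; auto. apply C0_ex. apply C0_abs; auto. apply C0_ex; auto.
  intros x Hx. apply H. lra.
Qed.

Lemma RInt_mono F G a b : a <= b -> C0 F -> C0 G ->
  (forall x, a <= x <= b -> F x <= G x) -> RInt F a b <= RInt G a b.
Proof.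
  intros Hab cF cG H. apply RInt_le; auto. apply C0_ex; auto. apply C0_ex; auto.
  intros x Hx. apply H. lra.
Qed.

Lemma RInt_nonneg F a b : a <= b -> C0 F -> (forall x, 0 <= F x) -> 0 <= RInt F a b.
Proof.
  intros Hab cF H. apply RInt_ge_0; auto. apply C0_ex; auto.
Qed.

Lemma RInt_scal' F a b k : C0 F -> RInt (fun x => k * F x) a b = k * RInt F a b.
Proof.
  intros cF. apply is_RInt_unique. apply isR_scal. apply C0_is; auto.
Qed.

Lemma RInt_plus_cst F a b c : C0 F -> RInt (fun x => F x + c) a b = RInt F a b + c * (b - a).
Proof.
  intros cF. apply is_RInt_unique. apply isR_plus. apply C0_is; auto.
  replace (c * (b - a)) with (scal (b - a) c). apply (@is_RInt_const R_NormedModule).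
  unfold scal; simpl; unfold mult; simpl; ring.
Qed.

Lemma RInt_cst' a b c : RInt (fun _ => c) a b = c * (b - a).
Proof.
  rewrite RInt_const. unfold scal; simpl; unfold mult; simpl; ring.
Qed.

Lemma pw2 A B u v e : Rabs u <= e -> Rabs v <= e -> Rabs (A * u - B * v) <= e * (Rabs A + Rabs B).
Proof.
  intros H1 H2. unfold Rminus. eapply Rle_trans. apply Rabs_triang.
  rewrite Rabs_Ropp, !Rabs_mult.
  assert (Rabs A * Rabs u <= Rabs A * e) by (apply Rmult_le_compat_l; auto; apply Rabs_pos).
  assert (Rabs B * Rabs v <= Rabs B * e) by (apply Rmult_le_compat_l; auto; apply Rabs_pos).
  lra.
Qed.

Lemma pw3 u' v' u v e1 e0 : Rabs u' <= e1 -> Rabs v' <= e1 -> Rabs u <= e0 -> Rabs v <= e0 ->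
  Rabs (u' * v - v' * u) <= 2 * e1 * e0.
Proof.
  intros H1 H2 H3 H4. unfold Rminus. eapply Rle_trans. apply Rabs_triang.
  rewrite Rabs_Ropp.
  pose proof (abs_le_mult _ _ _ _ H1 H4). pose proof (abs_le_mult _ _ _ _ H2 H3). lra.
Qed.

Lemma pw4 T P F s u e1 e2 : T = F - s -> P = F - u -> Rabs s <= e1 -> Rabs u <= e2 ->
  Rabs T <= Rabs P + e1 + e2.
Proof.
  intros -> -> H1 H2. replace (F - s) with ((F - u) + (u - s)) by ring.
  eapply Rle_trans. apply Rabs_triang. unfold Rminus at 2.
  pose proof (Rabs_triang u (- s)). rewrite Rabs_Ropp in H. lra.
Qed.

Lemma ratio A Ad V Vd C1 e : 0 < V -> 0 < Vd -> V <= C1 * Vd -> Rabs (A - Ad) <= e * Vd ->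
  Rabs (A / V - Ad / Vd) <= Rabs (A / V) * (1 + C1) + e.
Proof.
  intros HV HVd H1 H2.
  replace (A / V - Ad / Vd) with (A / V - (A / V) * (V / Vd) + (A - Ad) / Vd) by (field; lra).
  eapply Rle_trans. apply Rabs_triang. unfold Rminus.
  eapply Rle_trans. apply Rplus_le_compat_r. apply Rabs_triang.
  rewrite Rabs_Ropp, Rabs_mult.
  rewrite (Rabs_right (V / Vd)) by (left; apply Rdiv_lt_0_compat; auto).
  assert (V / Vd <= C1). { apply Rmult_le_reg_r with Vd; auto. field_simplify; lra. }
  assert (Rabs (A / V) * (V / Vd) <= Rabs (A / V) * C1) by (apply Rmult_le_compat_l; auto; apply Rabs_pos).
  assert (Rabs ((A + - Ad) / Vd) <= e).
  { unfold Rdiv. rewrite Rabs_mult, Rabs_inv, (Rabs_right Vd) by lra.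
    apply Rmult_le_reg_r with Vd; auto. field_simplify; try lra. unfold Rminus in H2. lra. }
  lra.
Qed.

Lemma pow_pred_mult x m : (0 < m)%nat -> x ^ (m - 1) * x = x ^ m.
Proof. intros Hm. replace m with (S (m - 1)) at 2 by lia. simpl. ring. Qed.

Lemma pow_sq x m : x ^ (2 * m) = x ^ m * x ^ m.
Proof. rewrite Nat.mul_comm, pow_mult. simpl. ring. Qed.

Lemma key m f g h X a b w : (0 < m)%nat -> Cm m f -> Cm m g -> NoDup X -> length X = S m ->
  In a X -> In b X -> a < b -> 0 <= w <= 1 ->
  (forall x y, a - diam X <= x <= a + diam X -> a - diam X <= y <= a + diam X ->
     Rabs (Derive_n f m x - Derive_n f m y) <= w) ->
  (forall x y, a - diam X <= x <= a + diam X -> a - diam X <= y <= a + diam X ->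
     Rabs (Derive_n g m x - Derive_n g m y) <= w) ->
  0 < Vcont m f g a b /\ 0 < Vdisc m X f g a b /\
  Vcont m f g a b <= (1 + 4 * 2 ^ m) * Vdisc m X f g a b /\
  Rabs (Acont m f g h a b - Adisc m X f g h a b) <= 52 * 2 ^ m * 2 ^ m * w * Vdisc m X f g a b.
Proof.
  intros Hm Hf Hg Hn Hl Ha Hb Hab Hw Hwf Hwg.
  set (D := diam X) in *.
  assert (HbD : b - a <= D).
  { pose proof (diam_ge X b a Hb Ha). fold D in H. rewrite Rabs_right in H by lra. exact H. }
  assert (HX : forall y, In y X -> a - D <= y <= a + D).
  { intros y Hy. pose proof (diam_ge X y a Hy Ha). fold D in H. apply Rabs_le_between in H. lra. }
  assert (Hab' : forall x, a <= x <= b -> a - D <= x <= a + D) by (intros; lra).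
  assert (HtF := taylor_bounds m f a b w Hm Hf ltac:(lra) (fun x y Hx Hy => Hwf x y (Hab' x Hx) (Hab' y Hy))).
  assert (HtG := taylor_bounds m g a b w Hm Hg ltac:(lra) (fun x y Hx Hy => Hwg x y (Hab' x Hx) (Hab' y Hy))).
  assert (HpF := interp_bounds m f X a D w Hm Hf Hn Hl HX Hwf).
  assert (HpG := interp_bounds m g X a D w Hm Hg Hn Hl HX Hwg).
  destruct (Cm_deriv m f Hm Hf) as [df cdf].
  destruct (Cm_deriv m g Hm Hg) as [dg cdg].
  destruct (poly_deriv (Taylor m f a) m _ a Hm (Taylor_pc m f a)) as [dTf cTf].
  destruct (poly_deriv (Taylor m g a) m _ a Hm (Taylor_pc m g a)) as [dTg cTg].
  destruct (interp_pc m X f) as [cPf EPf]. destruct (interp_pc m X g) as [cPg EPg].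
  destruct (poly_deriv (Defs.interp m X f) m _ 0 Hm EPf) as [dPf cPf'].
  destruct (poly_deriv (Defs.interp m X g) m _ 0 Hm EPg) as [dPg cPg'].
  assert (cf : C0 f) by exact (C0_deriv _ _ df). assert (cg : C0 g) by exact (C0_deriv _ _ dg).
  assert (cTf0 : C0 (Taylor m f a)) by exact (C0_deriv _ _ dTf).
  assert (cTg0 : C0 (Taylor m g a)) by exact (C0_deriv _ _ dTg).
  assert (cPf0 : C0 (Defs.interp m X f)) by exact (C0_deriv _ _ dPf).
  assert (cPg0 : C0 (Defs.interp m X g)) by exact (C0_deriv _ _ dPg).
  assert (BT := bilin (Taylor m f a) (Taylor m g a) (fun x => f x - Taylor m f a x) (fun x => g x - Taylor m g a x)
     (Derive (Taylor m f a)) (Derive (Taylor m g a)) (fun x => Derive f x - Derive (Taylor m f a) x)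
     (fun x => Derive g x - Derive (Taylor m g a) x) a b dTf dTg
     (fun x => isd_minus _ _ x _ _ (df x) (dTf x)) (fun x => isd_minus _ _ x _ _ (dg x) (dTg x))
     cTf cTg (C0_minus _ _ cdf cTf) (C0_minus _ _ cdg cTg)).
  assert (BP := bilin (Defs.interp m X f) (Defs.interp m X g) (fun x => f x - Defs.interp m X f x) (fun x => g x - Defs.interp m X g x)
     (Derive (Defs.interp m X f)) (Derive (Defs.interp m X g)) (fun x => Derive f x - Derive (Defs.interp m X f) x)
     (fun x => Derive g x - Derive (Defs.interp m X g) x) a b dPf dPg
     (fun x => isd_minus _ _ x _ _ (df x) (dPf x)) (fun x => isd_minus _ _ x _ _ (dg x) (dPg x))
     cPf' cPg' (C0_minus _ _ cdf cPf') (C0_minus _ _ cdg cPg')).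
  assert (EQT : RInt (fun x => (Derive (Taylor m f a) x + (Derive f x - Derive (Taylor m f a) x)) * (Taylor m g a x + (g x - Taylor m g a x)) - (Derive (Taylor m g a) x + (Derive g x - Derive (Taylor m g a) x)) * (Taylor m f a x + (f x - Taylor m f a x))) a b = RInt (fun x => Derive f x * g x - Derive g x * f x) a b).
  { apply RInt_ext. intros x _. match goal with |- ?A = ?B => change (@eq R A B) end. ring. }
  cbv beta in BT. rewrite EQT in BT.
  assert (EQP : RInt (fun x => (Derive (Defs.interp m X f) x + (Derive f x - Derive (Defs.interp m X f) x)) * (Defs.interp m X g x + (g x - Defs.interp m X g x)) - (Derive (Defs.interp m X g) x + (Derive g x - Derive (Defs.interp m X g) x)) * (Defs.interp m X f x + (f x - Defs.interp m X f x))) a b = RInt (fun x => Derive f x * g x - Derive g x * f x) a b).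
  { apply RInt_ext. intros x _. match goal with |- ?A = ?B => change (@eq R A B) end. ring. }
  cbv beta in BP. rewrite EQP in BP.
  assert (TfA : Taylor m f a a = f a) by (rewrite Taylor_pc, pc_at; change (f a / 1 = f a); field).
  assert (TgA : Taylor m g a a = g a) by (rewrite Taylor_pc, pc_at; change (g a / 1 = g a); field).
  rewrite TfA, TgA in BT.
  rewrite !(interp_spec m X f Hn Hl a Ha), !(interp_spec m X f Hn Hl b Hb) in BP.
  rewrite !(interp_spec m X g Hn Hl a Ha), !(interp_spec m X g Hn Hl b Hb) in BP.
  set (QT := RInt (fun x => Rabs (Derive (Taylor m f a) x) + Rabs (Derive (Taylor m g a) x)) a b).
  set (QP := RInt (fun x => Rabs (Derive (Defs.interp m X f) x) + Rabs (Derive (Defs.interp m X g) x)) a b).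
  set (JT := RInt (fun x => Derive (Taylor m f a) x * (g x - Taylor m g a x) - Derive (Taylor m g a) x * (f x - Taylor m f a x)) a b) in BT.
  set (JP := RInt (fun x => Derive (Defs.interp m X f) x * (g x - Defs.interp m X g x) - Derive (Defs.interp m X g) x * (f x - Defs.interp m X f x)) a b) in BP.
  set (KT := RInt (fun x => (Derive f x - Derive (Taylor m f a) x) * (g x - Taylor m g a x) - (Derive g x - Derive (Taylor m g a) x) * (f x - Taylor m f a x)) a b) in BT.
  set (KP := RInt (fun x => (Derive f x - Derive (Defs.interp m X f) x) * (g x - Defs.interp m X g x) - (Derive g x - Derive (Defs.interp m X g) x) * (f x - Defs.interp m X f x)) a b) in BP.
  set (beta := b - a) in *. assert (Hbeta : 0 < beta) by (unfold beta; lra).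
  set (M := 2 ^ m). set (p := D ^ m). set (B := 2 * D).
  assert (HBm : B ^ m = M * p) by (unfold B, M, p; apply Rpow_mult_distr).
  assert (HD : 0 < D) by lra.
  assert (Hp : 0 < p) by (apply pow_lt; lra).
  assert (HM : 1 <= M) by (unfold M; apply pow_R1_Rle; lra).
  assert (Hbm : 0 < beta ^ m <= p) by (split; [apply pow_lt; lra| apply pow_incr; lra]).
  assert (Hbm1 : beta ^ (m - 1) <= B ^ (m - 1)) by (apply pow_incr; unfold B; lra).
  assert (HbB : beta ^ m <= B ^ m) by (apply pow_incr; unfold B; lra).
  assert (HB1 : B ^ (m - 1) * beta <= M * p).
  { rewrite <- HBm, <- (pow_pred_mult B m Hm). apply Rmult_le_compat_l. apply pow_le; unfold B; lra. unfold B; lra. }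
  assert (Hb1 : beta ^ (m - 1) * beta <= p) by (rewrite pow_pred_mult by auto; lra).
  assert (e1pos : 0 <= w * beta ^ (m - 1)) by (apply Rmult_le_pos; [lra|apply pow_le; lra]).
  assert (e2pos : 0 <= w * B ^ (m - 1)) by (apply Rmult_le_pos; [lra|apply pow_le; unfold B; lra]).
  assert (QTpos : 0 <= QT) by (apply RInt_nonneg; [lra| apply C0_plus; apply C0_abs; auto | intros; pose proof (Rabs_pos (Derive (Taylor m f a) x)); pose proof (Rabs_pos (Derive (Taylor m g a) x)); lra]).
  assert (QPpos : 0 <= QP) by (apply RInt_nonneg; [lra| apply C0_plus; apply C0_abs; auto | intros; pose proof (Rabs_pos (Derive (Defs.interp m X f) x)); pose proof (Rabs_pos (Derive (Defs.interp m X g) x)); lra]).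
  assert (h1 : Rabs JT <= w * p * QT).
  { eapply Rle_trans. apply (RInt_abs_bound _ (fun x => (w * beta ^ m) * (Rabs (Derive (Taylor m f a) x) + Rabs (Derive (Taylor m g a) x)))).
    lra. apply C0_minus; apply C0_mult; auto; apply C0_minus; auto.
    apply C0_mult. apply C0_const. apply C0_plus; apply C0_abs; auto.
    intros x Hx. apply pw2. apply (HtG x Hx). apply (HtF x Hx).
    rewrite RInt_scal' by (apply C0_plus; apply C0_abs; auto). fold QT.
    apply Rmult_le_compat_r; auto. apply Rmult_le_compat_l; lra. }
  assert (hdF : Rabs (Taylor m f a b - f a) <= QT).
  { rewrite <- TfA. rewrite <- (RInt_Derive (Taylor m f a) a b).
    2: { intros x _. eexists; apply dTf. }
    2: { intros x _. apply cTf. }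
    apply RInt_abs_bound; auto. lra. apply C0_plus; apply C0_abs; auto.
    intros x _. pose proof (Rabs_pos (Derive (Taylor m g a) x)). lra. }
  assert (hdG : Rabs (Taylor m g a b - g a) <= QT).
  { rewrite <- TgA. rewrite <- (RInt_Derive (Taylor m g a) a b).
    2: { intros x _. eexists; apply dTg. }
    2: { intros x _. apply cTg. }
    apply RInt_abs_bound; auto. lra. apply C0_plus; apply C0_abs; auto.
    intros x _. pose proof (Rabs_pos (Derive (Taylor m f a) x)). lra. }
  assert (hsb : Rabs (f b - Taylor m f a b) <= w * p).
  { eapply Rle_trans. apply (HtF b ltac:(lra)). apply Rmult_le_compat_l; lra. }
  assert (htb : Rabs (g b - Taylor m g a b) <= w * p).
  { eapply Rle_trans. apply (HtG b ltac:(lra)). apply Rmult_le_compat_l; lra. }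
  assert (h6 : Rabs KT <= 2 * w * w * p * p).
  { eapply Rle_trans. apply (RInt_abs_bound _ (fun _ => 2 * (w * beta ^ (m - 1)) * (w * beta ^ m))).
    lra. apply C0_minus; apply C0_mult; apply C0_minus; auto. apply C0_const.
    intros x Hx. apply pw3. apply (proj2 (HtF x Hx)). apply (proj2 (HtG x Hx)). apply (proj1 (HtF x Hx)). apply (proj1 (HtG x Hx)).
    rewrite RInt_cst'. fold beta.
    replace (2 * (w * beta ^ (m - 1)) * (w * beta ^ m) * beta) with (2 * w * w * (beta ^ (m - 1) * beta) * beta ^ m) by ring.
    assert (W2 : 0 <= 2 * w * w) by (apply Rmult_le_pos; [apply Rmult_le_pos|]; lra).
    assert (0 <= beta ^ (m - 1) * beta) by (apply Rmult_le_pos; [apply pow_le|]; lra).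
    apply Rmult_le_compat; try lra. apply Rmult_le_pos; lra. apply Rmult_le_compat_l; lra. }
  assert (h7 : Rabs JP <= w * M * p * QP).
  { eapply Rle_trans. apply (RInt_abs_bound _ (fun x => (w * B ^ m) * (Rabs (Derive (Defs.interp m X f) x) + Rabs (Derive (Defs.interp m X g) x)))).
    lra. apply C0_minus; apply C0_mult; auto; apply C0_minus; auto.
    apply C0_mult. apply C0_const. apply C0_plus; apply C0_abs; auto.
    intros x Hx. apply pw2. apply (HpG x (Hab' x Hx)). apply (HpF x (Hab' x Hx)).
    rewrite RInt_scal' by (apply C0_plus; apply C0_abs; auto). fold QP.
    rewrite HBm. right; ring. }
  assert (h8 : Rabs KP <= 2 * w * w * M * M * p * p).
  { eapply Rle_trans. apply (RInt_abs_bound _ (fun _ => 2 * (w * B ^ (m - 1)) * (w * B ^ m))).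
    lra. apply C0_minus; apply C0_mult; apply C0_minus; auto. apply C0_const.
    intros x Hx. apply pw3. apply (proj2 (HpF x (Hab' x Hx))). apply (proj2 (HpG x (Hab' x Hx))). apply (proj1 (HpF x (Hab' x Hx))). apply (proj1 (HpG x (Hab' x Hx))).
    rewrite RInt_cst'. fold beta. rewrite HBm.
    replace (2 * (w * B ^ (m - 1)) * (w * (M * p)) * beta) with (2 * w * w * (M * p) * (B ^ (m - 1) * beta)) by ring.
    replace (2 * w * w * M * M * p * p) with (2 * w * w * (M * p) * (M * p)) by ring.
    apply Rmult_le_compat_l; auto. apply Rmult_le_pos; [apply Rmult_le_pos; [apply Rmult_le_pos|]|]; lra. }
  assert (h9 : QT <= QP + 4 * w * M * p).
  { eapply Rle_trans. apply (RInt_mono _ (fun x => (Rabs (Derive (Defs.interp m X f) x) + Rabs (Derive (Defs.interp m X g) x)) + 2 * (w * beta ^ (m - 1) + w * B ^ (m - 1)))).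
    lra. apply C0_plus; apply C0_abs; auto. apply C0_plus. apply C0_plus; apply C0_abs; auto. apply C0_const.
    intros x Hx.
    assert (Rabs (Derive (Taylor m f a) x) <= Rabs (Derive (Defs.interp m X f) x) + w * beta ^ (m - 1) + w * B ^ (m - 1)).
    { apply (pw4 _ _ (Derive f x) (Derive f x - Derive (Taylor m f a) x) (Derive f x - Derive (Defs.interp m X f) x)); [ring|ring|apply (proj2 (HtF x Hx))|apply (proj2 (HpF x (Hab' x Hx)))]. }
    assert (Rabs (Derive (Taylor m g a) x) <= Rabs (Derive (Defs.interp m X g) x) + w * beta ^ (m - 1) + w * B ^ (m - 1)).
    { apply (pw4 _ _ (Derive g x) (Derive g x - Derive (Taylor m g a) x) (Derive g x - Derive (Defs.interp m X g) x)); [ring|ring|apply (proj2 (HtG x Hx))|apply (proj2 (HpG x (Hab' x Hx)))]. }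
    lra.
    rewrite RInt_plus_cst by (apply C0_plus; apply C0_abs; auto). fold QP. fold beta.
    assert (2 * (w * beta ^ (m - 1) + w * B ^ (m - 1)) * beta = 2 * w * (beta ^ (m - 1) * beta) + 2 * w * (B ^ (m - 1) * beta)) by ring.
    assert (2 * w * (beta ^ (m - 1) * beta) <= 2 * w * p) by (apply Rmult_le_compat_l; lra).
    assert (2 * w * (B ^ (m - 1) * beta) <= 2 * w * (M * p)) by (apply Rmult_le_compat_l; lra).
    assert (2 * w * p <= 2 * w * (M * p)).
    { apply Rmult_le_compat_l. lra. pose proof (Rmult_le_compat_r p 1 M ltac:(lra) HM). lra. }
    assert (2 * w * (M * p) + 2 * w * (M * p) = 4 * w * M * p) by ring.
    lra. }
  destruct (alg w M p QT QP JT JP KT KP (Taylor m f a b - f a) (Taylor m g a b - g a)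
     (f b - Taylor m f a b) (g b - Taylor m g a b) (beta ^ m) Hw HM Hp QTpos QPpos Hbm
     h1 hdF hdG hsb htb h6 h7 h8 h9) as [R1 R2].
  assert (EV : Vcont m f g a b = beta ^ m * beta ^ m + beta ^ m * QT).
  { unfold Vcont. rewrite pow_sq. reflexivity. }
  assert (EVd : Vdisc m X f g a b = p * p + p * QP).
  { unfold Vdisc. fold D. rewrite pow_sq. reflexivity. }
  assert (EA : Acont m f g h a b - Adisc m X f g h a b =
     4 * JT - 2 * (Taylor m f a b - f a) * (g b - Taylor m g a b) + 2 * (Taylor m g a b - g a) * (f b - Taylor m f a b)
     + 2 * KT - 4 * JP - 2 * KP).
  { unfold Acont, Adisc. fold JT. lra. }
  rewrite EV, EVd, EA. repeat split.
  - assert (0 < beta ^ m * beta ^ m) by (apply Rmult_lt_0_compat; lra).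
    assert (0 <= beta ^ m * QT) by (apply Rmult_le_pos; lra). lra.
  - assert (0 < p * p) by (apply Rmult_lt_0_compat; lra).
    assert (0 <= p * QP) by (apply Rmult_le_pos; lra). lra.
  - exact R1.
  - eapply Rle_trans. exact R2. right; ring.
Qed.

Lemma unif_Dm m f lo hi : Cm m f -> forall eps, 0 < eps -> exists d, 0 < d /\
  forall x y, lo <= x <= hi -> lo <= y <= hi -> Rabs (x - y) < d -> Rabs (Derive_n f m x - Derive_n f m y) < eps.
Proof.
  intros [_ [Hc _]] eps Heps.
  assert (U := Heine (Derive_n f m) (fun c => lo <= c <= hi) (compact_P3 lo hi)
     (fun x _ => proj2 (continuity_pt_filterlim _ _) (Hc m x (le_n m)))).
  destruct (U (mkposreal eps Heps)) as [d Hd].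
  exists d. split. apply cond_pos. intros x y Hx Hy Hxy. apply (Hd x y Hx Hy Hxy).
Qed.

Lemma part1 (m : nat) (f g h : R -> R) (K : R -> Prop) :
  (0 < m)%nat -> Cm m f -> Cm m g ->
  Rtopology.compact K -> AV_condition m f g h K ->
  (forall eps, 0 < eps -> exists delta, 0 < delta /\
    forall X : list R, NoDup X -> length X = S m -> List.Forall K X -> diam X < delta ->
      forall a b, List.In a X -> List.In b X -> a < b ->
        Rabs (Acont m f g h a b / Vcont m f g a b
              - Adisc m X f g h a b / Vdisc m X f g a b) < eps).
Proof.
  intros Hm Hf Hg HK HAV eps Heps.
  destruct (compact_P1 K HK) as [lo0 [hi0 HB]].
  set (M := 2 ^ m).
  assert (HM : 1 <= M) by (unfold M; apply pow_R1_Rle; lra).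
  set (eta := Rmin 1 (eps / (2 * (52 * M * M)))).
  assert (Heta : 0 < eta) by (unfold eta; apply Rmin_pos; [lra| apply Rdiv_lt_0_compat; nra]).
  assert (Heta1 : eta <= 1) by (unfold eta; apply Rmin_l).
  assert (Heta2 : 52 * M * M * eta <= eps / 2).
  { assert (eta <= eps / (2 * (52 * M * M))) by (unfold eta; apply Rmin_r).
    assert (0 < 52 * M * M) by nra.
    apply Rmult_le_reg_r with (/ (52 * M * M)). apply Rinv_0_lt_compat; auto.
    replace (52 * M * M * eta * / (52 * M * M)) with eta by (field; lra).
    replace (eps / 2 * / (52 * M * M)) with (eps / (2 * (52 * M * M))) by (field; lra). auto. }
  destruct (unif_Dm m f (lo0 - 1) (hi0 + 1) Hf eta Heta) as [df [Hdf Hf']].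
  destruct (unif_Dm m g (lo0 - 1) (hi0 + 1) Hg eta Heta) as [dg [Hdg Hg']].
  set (e' := eps / (2 * (2 + 4 * M))).
  assert (He' : 0 < e') by (unfold e'; apply Rdiv_lt_0_compat; lra).
  destruct (HAV e' He') as [dA [HdA HA]].
  exists (Rmin dA (Rmin (Rmin (df / 2) (dg / 2)) 1)).
  split.
  { apply Rmin_pos; auto. apply Rmin_pos; [apply Rmin_pos|]; lra. }
  intros X Hn Hl HKX HD a b Ha Hb Hab.
  set (D := diam X) in *.
  assert (D1 : D < dA) by (eapply Rlt_le_trans; [exact HD| apply Rmin_l]).
  assert (D2 : D < df / 2 /\ D < dg / 2 /\ D < 1).
  { pose proof (Rmin_r dA (Rmin (Rmin (df / 2) (dg / 2)) 1)).
    pose proof (Rmin_l (Rmin (df / 2) (dg / 2)) 1). pose proof (Rmin_r (Rmin (df / 2) (dg / 2)) 1).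
    pose proof (Rmin_l (df / 2) (dg / 2)). pose proof (Rmin_r (df / 2) (dg / 2)). lra. }
  assert (Ka : K a) by (rewrite Forall_forall in HKX; auto).
  assert (Kb : K b) by (rewrite Forall_forall in HKX; auto).
  assert (HbD : b - a <= D).
  { pose proof (diam_ge X b a Hb Ha). fold D in H. rewrite Rabs_right in H by lra. exact H. }
  pose proof (HB a Ka) as HBa.
  assert (Hwf : forall x y, a - D <= x <= a + D -> a - D <= y <= a + D ->
     Rabs (Derive_n f m x - Derive_n f m y) <= eta).
  { intros x y Hx Hy. left. apply Hf'; try lra. apply Rle_lt_trans with (2 * D); [apply (proj2 (Rabs_le_between' x y (2 * D))); lra | lra]. }
  assert (Hwg : forall x y, a - D <= x <= a + D -> a - D <= y <= a + D ->
     Rabs (Derive_n g m x - Derive_n g m y) <= eta).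
  { intros x y Hx Hy. left. apply Hg'; try lra. apply Rle_lt_trans with (2 * D); [apply (proj2 (Rabs_le_between' x y (2 * D))); lra | lra]. }
  destruct (key m f g h X a b eta Hm Hf Hg Hn Hl Ha Hb Hab ltac:(lra) Hwf Hwg) as [V1 [V2 [V3 V4]]].
  fold M in V3, V4.
  assert (HAab : Rabs (Acont m f g h a b / Vcont m f g a b) < e') by (apply HA; auto; lra).
  eapply Rle_lt_trans. apply (ratio _ _ _ _ (1 + 4 * M) (52 * M * M * eta) V1 V2 V3 V4).
  assert (Rabs (Acont m f g h a b / Vcont m f g a b) * (1 + (1 + 4 * M)) < e' * (2 + 4 * M)).
  { replace (1 + (1 + 4 * M)) with (2 + 4 * M) by ring. apply Rmult_lt_compat_r; lra. }
  assert (e' * (2 + 4 * M) = eps / 2) by (unfold e'; field; lra).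
  lra.
Qed.

Theorem lemma4p4 (m : nat) (f g h : R -> R) (K : R -> Prop) :
  (0 < m)%nat ->
  Cm m f -> Cm m g -> Cm m h ->
  Rtopology.compact K ->
  (exists l : list R, NoDup l /\ length l = S m /\ List.Forall K l) ->
  AV_condition m f g h K ->
  (forall eps, 0 < eps -> exists delta, 0 < delta /\
    forall X : list R, NoDup X -> length X = S m -> List.Forall K X -> diam X < delta ->
      forall a b, List.In a X -> List.In b X -> a < b ->
        Rabs (Acont m f g h a b / Vcont m f g a b
              - Adisc m X f g h a b / Vdisc m X f g a b) < eps)
  /\ discrete_AV_condition m f g h K.
Proof.
  intros Hm Hf Hg Hh HK _ HAV.
  assert (P := part1 m f g h K Hm Hf Hg HK HAV).
  split; auto.
  intros eps Heps.
  destruct (P (eps / 2) ltac:(lra)) as [d1 [Hd1 H1]].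
  destruct (HAV (eps / 2) ltac:(lra)) as [d2 [Hd2 H2]].
  exists (Rmin d1 d2). split. apply Rmin_pos; auto.
  intros X Hn Hl HKX HD a b Ha Hb Hab.
  assert (HbD : b - a <= diam X).
  { pose proof (diam_ge X b a Hb Ha). rewrite Rabs_right in H by lra. exact H. }
  pose proof (Rmin_l d1 d2). pose proof (Rmin_r d1 d2).
  specialize (H1 X Hn Hl HKX ltac:(lra) a b Ha Hb Hab).
  assert (Ka : K a) by (rewrite Forall_forall in HKX; auto).
  assert (Kb : K b) by (rewrite Forall_forall in HKX; auto).
  specialize (H2 a b Ka Kb ltac:(lra)).
  set (u := Acont m f g h a b / Vcont m f g a b) in *.
  set (v := Adisc m X f g h a b / Vdisc m X f g a b) in *.
  replace v with (u - (u - v)) by ring.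
  unfold Rminus at 1. eapply Rle_lt_trans. apply Rabs_triang. rewrite Rabs_Ropp. lra.
Qed.
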